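(* Let $(I,T)$ be a transition system with transition relation given as a finite set of top-level conjuncts $T=\{T_1,\dots,T_n\}$, and let $P$ be a safety property with $(I,T)\vdash P$. Consider the following procedure: set $S\leftarrow T$; then for each conjunct $x$ of $T$ in turn (in some order), if $(I,S\setminus\{x\})\vdash P$ then set $S\leftarrow S\setminus\{x\}$; finally return $S$. Then the returned set is a minimal inductive validity core for $(I,T)\vdash P$.
   Context: A transition system $(I,T)$ over a state space $\Sigma$ consists of an initial-state predicate $I:\Sigma\to\mathit{bool}$ and a transition predicate $T:\Sigma\times\Sigma\to\mathit{bool}$. The reachable-state predicate $R$ of $(I,T)$ is the smallest predicate with $\forall s.\, I(s)\Rightarrow R(s)$ and $\forall s,s'.\, R(s)\land T(s,s')\Rightarrow R(s')$. A safety property is a predicate $P:\Sigma\to\mathit{bool}$; we write $(I,T)\vdash P$ if $\forall s.\,R(s)\Rightarrow P(s)$. The transition relation is assumed to be a top-level conjunction $T_1\land\cdots\land T_n$, and $T$ is identified with the set of its top-level conjuncts; for $S\subseteq T$, $S$ also denotes the transition relation given by the conjunction of its elements, and $S\setminus\{x\}$ is $S$ with the conjunct $x$ removed. Given $(I,T)\vdash P$, a set $S\subseteq T$ is an inductive validity core (IVC) for $(I,T)\vdash P$ iff $(I,S)\vdash P$; an IVC $S$ is minimal iff there is no IVC $M$ for $(I,T)\vdash P$ with $M\subsetneq S$. The checks $(I,S\setminus\{x\})\vdash P$ are performed by an exact oracle (the procedure is considered as a mathematical function of its input). *)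

(* Defs.v *)
From mathcomp Require Import all_boot.
From Stdlib Require Import ClassicalEpsilon.
Set Implicit Arguments. Unset Strict Implicit. Unset Printing Implicit Defensive.

(* Conjuncts are indexed by a finite type J; conjunct j is the transition
   predicate trans j : Σ -> Σ -> Prop.  The full relation T is [set: J]. *)

Definition conj_rel (Sigma : Type) (J : finType)
  (trans : J -> Sigma -> Sigma -> Prop) (S : {set J}) : Sigma -> Sigma -> Prop :=
  fun s s' => forall j, j \in S -> trans j s s'.

Inductive reachable (Sigma : Type) (I : Sigma -> Prop)
    (Tr : Sigma -> Sigma -> Prop) : Sigma -> Prop :=
| reach_init : forall s, I s -> reachable I Tr s
| reach_step : forall s s', reachable I Tr s -> Tr s s' -> reachable I Tr s'.

Definition proves (Sigma : Type) (I : Sigma -> Prop)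
  (Tr : Sigma -> Sigma -> Prop) (P : Sigma -> Prop) : Prop :=
  forall s, reachable I Tr s -> P s.

Definition is_IVC (Sigma : Type) (J : finType) (I : Sigma -> Prop)
  (trans : J -> Sigma -> Sigma -> Prop) (P : Sigma -> Prop) (S : {set J}) : Prop :=
  proves I (conj_rel trans S) P.

Definition is_minimal_IVC (Sigma : Type) (J : finType) (I : Sigma -> Prop)
  (trans : J -> Sigma -> Sigma -> Prop) (P : Sigma -> Prop) (S : {set J}) : Prop :=
  is_IVC I trans P S /\
  forall M : {set J}, M \proper S -> ~ is_IVC I trans P M.

Definition oracle (Q : Prop) : bool :=
  if excluded_middle_informative Q then true else false.

Definition ivc_step (Sigma : Type) (J : finType) (I : Sigma -> Prop)
  (trans : J -> Sigma -> Sigma -> Prop) (P : Sigma -> Prop)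
  (S : {set J}) (x : J) : {set J} :=
  if oracle (is_IVC I trans P (S :\ x)) then S :\ x else S.

Definition ivc_proc (Sigma : Type) (J : finType) (I : Sigma -> Prop)
  (trans : J -> Sigma -> Sigma -> Prop) (P : Sigma -> Prop)
  (order : seq J) : {set J} :=
  foldl (ivc_step I trans P) [set: J] order.

(* Main.v *)
Require Import Defs.
From mathcomp Require Import all_boot.
From Stdlib Require Import ClassicalEpsilon.

Section L.
Variables (Sigma : Type) (J : finType) (I : Sigma -> Prop)
  (trans : J -> Sigma -> Sigma -> Prop) (P : Sigma -> Prop).

Lemma ivc_mono (A B : {set J}) : A \subset B ->
  is_IVC I trans P A -> is_IVC I trans P B.
Proof.
move=> sAB HA s Hs; apply: HA.
elim: Hs => [s0 H0|s0 s1 _ IH Ht]; first by apply: reach_init.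
apply: reach_step IH _ => j Hj; apply: Ht; exact: (subsetP sAB).
Qed.

Lemma fold_props (s : seq J) (A : {set J}) :
  let R := foldl (ivc_step I trans P) A s in
  [/\ R \subset A,
      (is_IVC I trans P A -> is_IVC I trans P R) &
      forall x, x \in s -> x \in R ->
        exists B : {set J}, R \subset B /\ ~ is_IVC I trans P (B :\ x)].
Proof.
elim: s A => [|y s IH] A /=; first by split => //.
have [H1 H2 H3] := IH (ivc_step I trans P A y).
set R := foldl _ _ s in H1 H2 H3 *.
have sstep : ivc_step I trans P A y \subset A.
  rewrite /ivc_step; case: (oracle _) => //; exact: subsetDl.
split; first exact: subset_trans H1 sstep.
- move=> HA; apply: H2; rewrite /ivc_step /oracle.
  by case: excluded_middle_informative.
- move=> x; rewrite in_cons => /orP [/eqP -> | xs] xR; last exact: H3.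
  move: H1; rewrite /ivc_step /oracle.
  case: excluded_middle_informative => Hc H1.
  + by move: (subsetP H1 _ xR); rewrite in_setD1 eqxx.
  + by exists A; split.
Qed.

End L.

Theorem lemma2 (Sigma : Type) (J : finType) (I : Sigma -> Prop)
  (trans : J -> Sigma -> Sigma -> Prop) (P : Sigma -> Prop) (order : seq J) :
  perm_eq order (enum J) ->
  is_IVC I trans P [set: J] ->
  is_minimal_IVC I trans P (ivc_proc I trans P order).
Proof.
move=> Hp HT.
have [_ H2 H3] := @fold_props Sigma J I trans P order [set: J].
rewrite /ivc_proc; split; first exact: H2.
move=> M /properP [sMR [x xR xM]] HM.
have xo : x \in order by rewrite (perm_mem Hp) mem_enum.
have [B [sRB HB]] := H3 x xo xR.
apply: HB; apply: ivc_mono HM.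
apply/subsetP => y yM; rewrite in_setD1; apply/andP; split.
- by apply/eqP => E; subst y; rewrite yM in xM.
- exact: (subsetP sRB) (subsetP sMR _ yM).
Qed.
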